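(* The a priori Recursive Measure satisfies the strong minimum-power blocker postulate. For every SVG $\mathcal{G}=(N,\mathcal{W})$: (1) if $S\in\mathcal{W}$ and $b\in S$ is a YES-blocker, then $RM'_b\ge 1/|S|$; (2) if $T\notin\mathcal{W}$ and $b\in N\setminus T$ is a NO-blocker, then $RM'_b\ge 1/|N\setminus T|$. (Here $1$ is the RM value of a dictator in a dictator-rule game.)
   Context: A simple voting game (SVG) is a pair $\mathcal{G}=(N,\mathcal{W})$ with $N$ a nonempty finite set of $n$ players and $\mathcal{W}\subseteq 2^N$ monotone, $\emptyset\notin\mathcal{W}$, $N\in\mathcal{W}$. Divisions are identified with their YES-sets $S\subseteq N$. Decisiveness and success: - Player $k$ is YES-decisive in $S$ if $k\in S\in\mathcal{W}$ and $S\setminus\{k\}\notin\mathcal{W}$. - Player $k$ is NO-decisive in $S$ if $k\notin S\notin\mathcal{W}$ and $S\cup\{k\}\in\mathcal{W}$. - Player $k$ is successful in $S$ if ($k\in S\in\mathcal{W}$) or ($k\notin S\notin\mathcal{W}$). Loyal children: if $S\in\mathcal{W}$, they are the sets $S\setminus\{m\}\in\mathcal{W}$ with $m\in S$. If $S\notin\mathcal{W}$, they are the sets $S\cup\{m\}\notin\mathcal{W}$ with $m\notin S$. Recursive efficacy score $\alpha_k(S)$: - $\alpha_k(S)=1$ if $k$ is decisive; - $\alpha_k(S)=0$ if $k$ is not successful; - otherwise, the average of $\alpha_k$ over the loyal children of $S$. The a priori Recursive Measure is $RM'_k=2^{-n}\sum_{S\subseteq N}\alpha_k(S)$. Blockers: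 $b$ is a YES-blocker if $b\in S$ for all $S\in\mathcal{W}$, and a NO-blocker if $b\notin S$ for all $S\notin\mathcal{W}$. *)

(* Defs.v *)
(* Players: a finite type T (N = [set: T]); divisions = YES-sets S : {set T}. *)
From mathcomp Require Import all_boot all_order all_algebra.
Set Implicit Arguments. Unset Strict Implicit. Unset Printing Implicit Defensive.
Import Order.TTheory GRing.Theory Num.Theory.
Local Open Scope ring_scope.

Section SVG.
Variable T : finType.
Variable W : {set {set T}}.

Definition SVG : Prop :=
  [/\ forall S S' : {set T}, S \subset S' -> S \in W -> S' \in W,
      set0 \notin W & [set: T] \in W].

Definition yes_decisive (k : T) (S : {set T}) : bool :=
  [&& k \in S, S \in W & (S :\ k) \notin W].
Definition no_decisive (k : T) (S : {set T}) : bool :=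
  [&& k \notin S, S \notin W & (k |: S) \in W].
Definition decisive (k : T) (S : {set T}) : bool :=
  yes_decisive k S || no_decisive k S.
Definition successful (k : T) (S : {set T}) : bool :=
  ((k \in S) && (S \in W)) || ((k \notin S) && (S \notin W)).

Definition loyal_children (S : {set T}) : {set {set T}} :=
  if S \in W then [set S :\ m | m in [set m in S | (S :\ m) \in W]]
  else [set m |: S | m in [set m in ~: S | (m |: S) \notin W]].

(* Recursive efficacy score, computed with fuel; along any chain of loyal
   children the recursion stops after at most #|T| steps, so fuel #|T|.+1
   is enough and the value is the recursively defined alpha_k(S). *)
Fixpoint alpha_fuel (fuel : nat) (k : T) (S : {set T}) : rat :=
  if decisive k S then 1
  else if ~~ successful k S then 0
  else match fuel with
       | 0%N => 0
       | f.+1 => (\sum_(C in loyal_children S) alpha_fuel f k C)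
                   / (#|loyal_children S|)%:R
       end.

Definition alpha (k : T) (S : {set T}) : rat := alpha_fuel #|T|.+1 k S.

Definition RM' (k : T) : rat := (\sum_(S : {set T}) alpha k S) / (2 ^ #|T|)%:R.

Definition yes_blocker (b : T) : Prop := forall S : {set T}, S \in W -> b \in S.
Definition no_blocker (b : T) : Prop := forall S : {set T}, S \notin W -> b \notin S.

End SVG.

(* Main.v *)
Require Import Defs.
From mathcomp Require Import all_boot all_order all_algebra.
Import Order.TTheory GRing.Theory Num.Theory.
From mathcomp Require Import zify ring lra.
Local Open Scope ring_scope.
Set Implicit Arguments. Unset Strict Implicit. Unset Printing Implicit Defensive.

Lemma alpha_dec (T : finType) (W : {set {set T}}) f k X :
  decisive W k X -> alpha_fuel W f k X = 1.
Proof. by case: f => [|f] /= ->. Qed.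

Lemma alpha_ge0 (T : finType) (W : {set {set T}}) f k X :
  0 <= alpha_fuel W f k X.
Proof.
elim: f X => [|f IH] X /=.
  by case: (decisive W k X) => //; case: (~~ successful W k X).
case: (decisive W k X) => //; case: (~~ successful W k X) => //.
by apply: divr_ge0; [apply: sumr_ge0 => C _; apply: IH | apply: ler0n].
Qed.

Lemma alpha_step (T : finType) (W : {set {set T}}) f k X :
  ~~ decisive W k X -> successful W k X ->
  alpha_fuel W f.+1 k X =
  (\sum_(C in loyal_children W X) alpha_fuel W f k C) / (#|loyal_children W X|)%:R.
Proof. by move=> /negbTE hd hs /=; rewrite hd hs. Qed.

Lemma core (T : finType) (W : {set {set T}}) (S : {set T}) (b : T) :
  SVG W -> S \in W -> b \in S -> yes_blocker W b ->
  forall (f : nat) (X : {set T}), b \notin X -> (#|~: X| <= f.+1)%N ->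
  1 / (#|S :\: X|)%:R <= alpha_fuel W f b X.
Proof.
move=> [mono W0 WT] SW bS yb.
have notW (X : {set T}) : b \notin X -> X \notin W.
  by move=> bX; apply/negP => /yb; rewrite (negbTE bX).
have decE (X : {set T}) : b \notin X -> decisive W b X = (b |: X \in W).
  move=> bX; rewrite /decisive /yes_decisive /no_decisive (negbTE bX) /=.
  by rewrite (notW _ bX).
have succ (X : {set T}) : b \notin X -> successful W b X.
  by move=> bX; rewrite /successful (negbTE bX) (notW _ bX) orbT.
have kpos (X : {set T}) : b \notin X -> (0 < #|S :\: X|)%N.
  by move=> bX; apply/card_gt0P; exists b; rewrite inE bX bS.
have le1 (X : {set T}) : b \notin X -> 1 / (#|S :\: X|)%:R <= 1 :> rat.
  move=> bX; rewrite ler_pdivrMr ?ltr0n ?kpos // mul1r ler1n; exact: kpos.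
elim=> [|f IH] X bX hX.
  case hd: (decisive W b X); first by rewrite alpha_dec // le1.
  exfalso; move: hd; rewrite decE // => /negP; apply.
  have -> : b |: X = setT.
    apply/setP => x; rewrite !inE; case xX: (x \in X); rewrite ?orbT //.
    have hb : b \in ~: X by rewrite inE.
    have hx : x \in ~: X by rewrite inE xX.
    have /card_le1_eqP := hX; move=> /(_ x b hx hb) ->; by rewrite eqxx.
  exact: WT.
case hd: (decisive W b X); first by rewrite alpha_dec // le1.
have hbX : b |: X \notin W by rewrite -decE // hd.
rewrite alpha_step ?hd ?succ //.
set M := [set m in ~: X | m |: X \notin W].
have LCE : loyal_children W X = [set m |: X | m in M].
  by rewrite /loyal_children (negbTE (notW _ bX)).
have injM : {in M &, injective (fun m => m |: X)}.
  move=> m m2 hm hm2 e; move: hm hm2; rewrite !inE => /andP[mX _] /andP[m2X _].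
  have : m \in m2 |: X by rewrite -e setU11.
  by case/setU1P => // mX2; rewrite mX2 in mX.
rewrite LCE big_imset //= card_in_imset //.
set k := #|S :\: X|.
have bM : b \in M by rewrite inE hbX inE bX.
have Mpos : (0 < #|M|)%N by apply/card_gt0P; exists b.
rewrite ler_pdivlMr ?ltr0n //.
have k2 : (1 < k)%N.
  rewrite ltn_neqAle kpos // andbT; apply/negP => /eqP k1.
  move/negP: hbX; apply; apply: (mono S) => //.
  apply/subsetP => x xS; rewrite inE; case xX: (x \in X); rewrite ?orbT //.
  have hx : x \in S :\: X by rewrite inE xX xS.
  have hb : b \in S :\: X by rewrite inE bX bS.
  have : (#|S :\: X| <= 1)%N by rewrite -/k -k1.
  by move/card_le1_eqP => /(_ x b hx hb) ->; rewrite !inE ?eqxx.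
have hcard m : m \in ~: X -> (#|~: (m |: X)| <= f.+1)%N.
  move=> mX; move: hX; rewrite (cardsD1 m (~: X)) mX add1n ltnS.
  by apply: leq_trans; apply: subset_leq_card; apply/subsetP => x; rewrite !inE negb_or andbC.
have MS : M :&: S = S :\: X.
  apply/setP => x; rewrite !inE; case xS: (x \in S); rewrite ?andbF ?andbT //.
  case xX: (x \in X) => //=.
  apply/negP => h; have := yb _ h; rewrite !inE => /orP[/eqP bx | bX2].
    by move: hbX; rewrite bx h.
  by rewrite bX2 in bX.
rewrite (big_setID S) /= MS -(cardsID S M) MS natrD mulrDr.
apply: lerD.
  rewrite (big_setD1 b) /=; last by rewrite inE bX bS.
  rewrite -[X in X <= _]add0r; apply: lerD; first exact: alpha_ge0.
  apply: le_trans (_ : \sum_(m in S :\: X :\ b) 1 / (k.-1)%:R <= _).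
    have kn : #|S :\: X| = #|S :\: X :\ b|.+1.
      by rewrite (cardsD1 b (S :\: X)) inE bX bS.
    rewrite sumr_const /k kn /=; rewrite /k kn in k2.
    rewrite -mulr_natr !mul1r !mulVf ?pnatr_eq0 //.
    rewrite -[_ *+ _]mulr_natr mulVf ?pnatr_eq0 // -lt0n -ltnS.
    exact: k2.
  apply: ler_sum => m; rewrite !inE => /andP[mb /andP[mX mS]].
  have -> : (k.-1 = #|S :\: (m |: X)|)%N.
    rewrite /k; have := cardsD1 m (S :\: X); rewrite inE mX mS /= => ->; rewrite add1n /=.
    by apply: eq_card => x; rewrite !inE negb_or; case: (x == m); case: (x \in X).
  apply: IH; first by rewrite !inE negb_or eq_sym mb.
  by apply: hcard; rewrite inE.
rewrite mulr_natr -sumr_const; apply: ler_sum => m; rewrite !inE => /andP[mS /andP[mX _]].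
have -> : k = #|S :\: (m |: X)|.
  by apply: eq_card => x; rewrite !inE negb_or; case xm: (x == m); rewrite ?andbT //= (eqP xm) (negbTE mS) !andbF.
rewrite mul1r -[X in X <= _]mul1r; apply: IH.
  rewrite !inE negb_or bX andbT; apply/negP => /eqP e; by rewrite -e bS in mS.
by apply: hcard; rewrite inE.
Qed.

Lemma sum_factor (T : finType) (S : {set T}) (F : {set T} -> rat) :
  \sum_(X : {set T}) F (X :&: S) =
  (2 ^ #|~: S|)%:R * \sum_(Y : {set T} | Y \subset S) F Y.
Proof.
rewrite (partition_big (fun X => X :&: S) (fun Y => Y \subset S)) /=; last first.
  by move=> X _; exact: subsetIr.
rewrite big_distrr /=; apply: eq_bigr => Y YS.
rewrite (eq_bigr (fun _ => F Y)); last by move=> X /eqP ->.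
rewrite (eq_bigl (mem [set X : {set T} | X :&: S == Y])); last by move=> X; rewrite !inE.
rewrite sumr_const [RHS]mulr_natl; congr (_ *+ _).
have -> : [set X : {set T} | X :&: S == Y] = (fun Z => Y :|: Z) @: powerset (~: S).
  apply/setP => X; rewrite inE; apply/eqP/imsetP.
    move=> e; exists (X :&: ~: S); first by rewrite inE subsetIr.
    apply/setP => x; rewrite -e !inE; by case: (x \in S); case: (x \in X).
  move=> [Z]; rewrite inE => ZS ->; apply/setP => x; rewrite !inE.
  case xS: (x \in S); rewrite ?andbT ?andbF.
    have -> : (x \in Z) = false by apply/negP => /(subsetP ZS); rewrite inE xS.
    by rewrite orbF.
  have -> : (x \in Y) = false by apply/negP => /(subsetP YS); rewrite xS.
  by [].
rewrite card_in_imset ?card_powerset //.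
move=> Z1 Z2; rewrite !inE => Z1S Z2S e; apply/setP => x.
case xS: (x \in S).
  have -> : (x \in Z1) = false by apply/negP => /(subsetP Z1S); rewrite inE xS.
  have -> : (x \in Z2) = false by apply/negP => /(subsetP Z2S); rewrite inE xS.
  by [].
have xY : (x \in Y) = false by apply/negP => /(subsetP YS); rewrite xS.
have := congr1 (fun A : {set T} => x \in A) e; by rewrite /= !inE xY.
Qed.

Lemma sum_by_card (T : finType) (U : {set T}) (f : nat -> rat) :
  \sum_(Y : {set T} | Y \subset U) f #|Y| =
  \sum_(j < #|U|.+1) ('C(#|U|, j))%:R * f j.
Proof.
rewrite (partition_big (fun Y : {set T} => (inord #|Y| : 'I_#|U|.+1)) predT) //=.
apply: eq_bigr => j _.
rewrite (eq_bigr (fun _ => f j)); last first.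
  move=> Y /andP[YU /eqP <-]; rewrite inordK // ltnS; exact: subset_leq_card.
rewrite (eq_bigl (mem [set Y : {set T} | Y \subset U & #|Y| == j])); last first.
  move=> Y; rewrite !inE; case YU: (Y \subset U) => //=.
  by rewrite -val_eqE /= inordK // ltnS; exact: subset_leq_card.
by rewrite sumr_const cards_draws mulr_natl.
Qed.

Lemma binsum (u : nat) :
  \sum_(j < u.+1) ('C(u, j))%:R * (1 / (u.+1 - j)%:R) =
  ((2 ^ u.+1)%:R - 1) / (u.+1)%:R :> rat.
Proof.
rewrite (reindex_inj rev_ord_inj) /=.
rewrite (eq_bigr (fun j : 'I_u.+1 => ('C(u.+1, j.+1))%:R / (u.+1)%:R)); last first.
  move=> j _; have ju : (j <= u)%N by rewrite -ltnS.
  rewrite bin_sub // mul1r.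
  have -> : (u.+1 - (u - j) = j.+1)%N by lia.
  apply/eqP; rewrite eqr_div ?pnatr_eq0 //.
  have h := mul_bin_diag u.+1 j; rewrite /= in h.
  by rewrite -!natrM mulnC h mulnC.
rewrite -mulr_suml; congr (_ / _).
have := expnDn 1 1 u.+1; rewrite big_ord_recl /= bin0 => e.
have e2 : (2 ^ u.+1 = 1 + \sum_(i < u.+1) 'C(u.+1, i.+1))%N.
  rewrite e; under eq_bigr do rewrite !exp1n !muln1; by rewrite !exp1n !muln1.
by rewrite e2 natrD natr_sum [1 + _]addrC addrK.
Qed.

Lemma part1 (T : finType) (W : {set {set T}}) (S : {set T}) (b : T) :
  SVG W -> S \in W -> b \in S -> yes_blocker W b -> 1 / (#|S|)%:R <= RM' W b.
Proof.
move=> svg SW bS yb; have [mono W0 WT] := svg.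
pose G (Y : {set T}) : rat :=
  if b \in Y then (if Y == S then 1 else 0) else 1 / (#|S :\: Y|)%:R.
have GX (X : {set T}) : G (X :&: S) <= alpha W b X.
  rewrite /G inE bS andbT; case bX: (b \in X).
    case: eqP => [e|_]; last exact: alpha_ge0.
    rewrite /alpha alpha_dec //.
    have SX : S \subset X by rewrite -e subsetIl.
    rewrite /decisive /yes_decisive bX (mono _ _ SX SW) /=.
    apply/orP; left; apply/negP => /yb; by rewrite !inE eqxx.
  have -> : S :\: (X :&: S) = S :\: X.
    by apply/setP => x; rewrite !inE; case: (x \in S); rewrite ?andbT ?andbF.
  apply: (core svg SW bS yb); first by rewrite bX.
  apply: leq_trans (max_card _) _; lia.
rewrite /RM'.
have s0 : (0 < #|S|)%N by apply/card_gt0P; exists b.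
have hn : #|T| = (#|~: S| + #|S|)%N by rewrite addnC cardsC.
apply: le_trans (_ : (\sum_(X : {set T}) G (X :&: S)) / (2 ^ #|T|)%:R <= _); last first.
  by rewrite ler_pM2r ?invr_gt0 ?ltr0n ?expn_gt0 //; apply: ler_sum => X _.
rewrite sum_factor.
have eG : \sum_(Y : {set T} | Y \subset S) G Y =
          1 + ((2 ^ #|S|)%:R - 1) / (#|S|)%:R.
  rewrite (bigID (fun Y : {set T} => b \in Y)) /=; congr (_ + _).
    rewrite (bigD1 S) /=; last by rewrite subxx bS.
    rewrite /G bS eqxx big1 ?addr0 // => Y /andP[/andP[_ bY] nYS].
    by rewrite bY (negbTE nYS).
  rewrite (eq_bigl (fun Y : {set T} => Y \subset S :\ b)); last first.
    by move=> Y; rewrite subsetD1.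
  rewrite (eq_bigr (fun Y : {set T} => (fun j => 1 / (#|S| - j)%:R) #|Y|)); last first.
    move=> Y; rewrite subsetD1 => /andP[YS bY]; rewrite /G (negbTE bY) cardsDS //.
  rewrite (sum_by_card (S :\ b) (fun j => 1 / (#|S| - j)%:R)) /=.
  have hs : #|S| = #|S :\ b|.+1 by rewrite (cardsD1 b S) bS.
  rewrite hs; exact: binsum.
rewrite eG hn expnD natrM.
set p := (2 ^ #|~: S|)%:R : rat.
set q := (2 ^ #|S|)%:R : rat.
set sr := (#|S|)%:R : rat.
have p0 : 0 < p by rewrite ltr0n expn_gt0.
have q0 : 0 < q by rewrite ltr0n expn_gt0.
have sr1 : 1 <= sr by rewrite ler1n.
have sr0 : 0 < sr by lra.
rewrite -subr_ge0.
have -> : p * (1 + (q - 1) / sr) / (p * q) - 1 / sr = (sr - 1) / (sr * q).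
  field; apply/and3P; split; rewrite ?lt0r_neq0 //.
apply: divr_ge0; first lra.
by apply: mulr_ge0; lra.
Qed.

Definition dualW (T : finType) (W : {set {set T}}) : {set {set T}} :=
  [set X | ~: X \notin W].

Lemma hC1 (T : finType) (k : T) (X : {set T}) : ~: (~: X :\ k) = k |: X.
Proof. by apply/setP => x; rewrite !inE; case: (x == k); case: (x \in X). Qed.
Lemma hC2 (T : finType) (k : T) (X : {set T}) : ~: (k |: ~: X) = X :\ k.
Proof. by apply/setP => x; rewrite !inE; case: (x == k); case: (x \in X). Qed.

Lemma dual_svg (T : finType) (W : {set {set T}}) : SVG W -> SVG (dualW W).
Proof.
move=> [mono W0 WT]; split.
- move=> A B AB; rewrite !inE; apply: contra => h; apply: (mono (~: B)) => //.
  by rewrite setCS.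
- by rewrite inE setC0 WT.
- by rewrite inE setCT W0.
Qed.

Lemma dual_alpha (T : finType) (W : {set {set T}}) f k (X : {set T}) :
  alpha_fuel (dualW W) f k (~: X) = alpha_fuel W f k X.
Proof.
have decE (Y : {set T}) : decisive (dualW W) k (~: Y) = decisive W k Y.
  rewrite /decisive /yes_decisive /no_decisive !inE setCK hC1 hC2.
  by rewrite !negbK orbC.
have succE (Y : {set T}) : successful (dualW W) k (~: Y) = successful W k Y.
  by rewrite /successful !inE setCK !negbK orbC.
have LCE (Y : {set T}) : loyal_children (dualW W) (~: Y) = (@setC T) @: loyal_children W Y.
  rewrite /loyal_children inE setCK; case YW: (Y \in W) => /=; rewrite -imset_comp.
    apply/setP => Z; apply/imsetP/imsetP => -[m hm ->]; exists m;
      move: hm; rewrite !inE /= ?hC2 ?negbK //; by rewrite -hC2 setCK.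
  apply/setP => Z; apply/imsetP/imsetP => -[m hm ->]; exists m;
    move: hm; rewrite !inE /= ?hC1 ?negbK //; by rewrite -hC1 setCK.
elim: f X => [|f IH] X /=; rewrite decE succE //.
rewrite LCE big_imset /=; last by move=> A B _ _; exact: setC_inj.
rewrite card_imset; last exact: setC_inj.
by under eq_bigr do rewrite IH.
Qed.

Lemma dual_RM (T : finType) (W : {set {set T}}) b : RM' (dualW W) b = RM' W b.
Proof.
rewrite /RM' (reindex_inj (@setC_inj T)) /=; congr (_ / _).
by apply: eq_bigr => X _; rewrite /alpha dual_alpha.
Qed.

Theorem theorem6 (T : finType) (W : {set {set T}}) :
  SVG W ->
  (forall (S : {set T}) (b : T), S \in W -> b \in S -> yes_blocker W b ->
     1 / (#|S|)%:R <= RM' W b) /\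
  (forall (S : {set T}) (b : T), S \notin W -> b \in ~: S -> no_blocker W b ->
     1 / (#|~: S|)%:R <= RM' W b).
Proof.
move=> svg; split; first by move=> S b; exact: part1.
move=> S b SW bS nb; rewrite -dual_RM.
apply: part1 => //; first exact: dual_svg.
  by rewrite inE setCK.
move=> X; rewrite inE => /nb; by rewrite inE negbK.
Qed.
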